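(* Consider an instance of the min-cost chain-constrained spanning tree problem (defined in the context) for which the LP $(P_1)$ is feasible, and let $\lambda>1$. The following algorithm returns a spanning tree $T$ of $G$ with $c(T)\le\frac{\lambda}{\lambda-1}\cdot\mathrm{OPT}$ and $|\delta_T(S)|\le 9\lambda b_S$ for all $S\in\mathcal{S}$: (1) compute an optimal solution $x^*$ to $(P_\lambda)$ and a laminar decomposition $\mathcal{L}$ of $x^*$; (2) compute a fractional spanning tree $x'$ and laminar family $\mathcal{L}'$ such that $(x',\mathcal{L}')$ is a rainbow-free decomposition, $\mathrm{supp}(x')\subseteq\mathrm{supp}(x^* )$, $\mathcal{L}\subseteq\mathcal{L}'$, and $x'(\delta(S))\le x^*(\delta(S))$ for all $S\in\mathcal{S}$; (3) apply the Olver–Zenklusen rounding algorithm to $(x',\mathcal{L}')$, which returns for every $L\in\mathcal{L}'$ a spanning tree $T_L\subseteq\mathrm{supp}(x')$ of $G^{\mathcal{L}'}_L$ such that the concatenation $T$ of the $T_L$ is a spanning tree of $G$ with $|\delta_T(S)|\le 9x'(\delta(S))$ for all $S\in\mathcal{S}$; return $T$.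
   Context: Min-cost chain-constrained spanning tree: given an undirected connected graph $G=(V,E)$, costs $c_e\ge0$, a chain $\mathcal{S}$ of node sets $S_1\subsetneq\dots\subsetneq S_\ell\subsetneq V$ and integers $b_S$ ($S\in\mathcal{S}$), find a min-cost spanning tree $T$ with $|\delta_T(S)|\le b_S$ for all $S\in\mathcal{S}$, where $\delta_T(S)=T\cap\delta(S)$. Notation: $E(S)$ = edges with both ends in $S$, $\delta(S)$ = edges with exactly one end in $S$, $z(F)=\sum_{e\in F}z_e$, $\mathrm{supp}(z)=\{e:z_e>0\}$, $c(T)=\sum_{e\in T}c_e$. For $\lambda\ge1$, $(P_\lambda)$ is the LP: minimize $\sum_e c_ex_e$ subject to $x(E(S))\le|S|-1$ for all $\emptyset\ne S\subsetneq V$, $x(E)=|V|-1$, $x(\delta(S))\le\lambda b_S$ for all $S\in\mathcal{S}$, $x\ge0$. $\mathrm{OPT}(\lambda)$ is its optimal value and $\mathrm{OPT}=\mathrm{OPT}(1)$. Points satisfying the first two constraint families and $x\ge 0$ are fractional spanning trees. A laminar decomposition of a fractional spanning tree $x$ is an inclusion-wise maximal laminar family of nonempty sets $A\subseteq V$ with $x(E(A))=|A|-1$. For a laminar family $\mathcal{L}$ and $L\in\mathcal{L}$, $G^{\mathcal{L}}_L$ is the graph obtained from $(L,E(L))$ by contracting the maximal members of $\mathcal{L}$ strictly contained in $L$. With $\mathcal{S}_e=\{S\in\mathcal{S}:e\in\delta(S)\}$, edges $e,f$ form a rainbow if $\mathcal{S}_e\subseteq\mathcal{S}_f$ or $\mathcal{S}_f\subseteq\mathcal{S}_e$;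 $(x,\mathcal{L})$ is rainbow-free if $\mathcal{L}$ is a laminar decomposition of $x$ and for every $L\in\mathcal{L}$ no two edges of $\mathrm{supp}(x)\cap E(G^{\mathcal{L}}_L)$ form a rainbow. *)

(* Defs.v *)
From HB Require Import structures.
From mathcomp Require Import all_boot all_order all_algebra.
Set Implicit Arguments. Unset Strict Implicit. Unset Printing Implicit Defensive.
Import Order.TTheory GRing.Theory Num.Theory.
Local Open Scope ring_scope.

(* A (loopless or not) multigraph: vertex finType V, edge finType E,
   each edge e has endpoints src e and tgt e (undirected). *)
Section Defs.
Variables (V E : finType) (src tgt : E -> V).

Definition Eset (S : {set V}) : {set E} := [set e | (src e \in S) && (tgt e \in S)].
Definition delta (S : {set V}) : {set E} := [set e | (src e \in S) != (tgt e \in S)].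

Definition is_chain (Ss : seq {set V}) : bool :=
  sorted (fun A B : {set V} => A \proper B) Ss && all (fun S : {set V} => S \proper [set: V]) Ss.

Definition adj (U : finType) (p q : E -> U) (F : {set E}) : rel U :=
  fun u v => [exists e in F, ((p e == u) && (q e == v)) || ((p e == v) && (q e == u))].

Definition spanning_tree (U : finType) (p q : E -> U) (W : {set U}) (Fall F : {set E}) : Prop :=
  [/\ F \subset Fall,
      (forall u v, u \in W -> v \in W -> connect (adj p q F) u v)
    & forall e, e \in F -> ~~ connect (adj p q (F :\ e)) (p e) (q e)].

Definition spanning_tree_G (F : {set E}) : Prop :=
  spanning_tree src tgt [set: V] [set: E] F.

Definition laminar (L : {set {set V}}) : Prop :=
  forall A B, A \in L -> B \in L -> [|| A \subset B, B \subset A | [disjoint A & B]].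

(* G^L_A: graph (A, E(A)) with the maximal members of L strictly inside A contracted.
   Vertices are represented by crep L A v : the maximal member of L strictly inside A
   containing v, or [set v] if there is none. *)
Definition maxchild (L : {set {set V}}) (A C : {set V}) : bool :=
  [&& C \in L, C \proper A & [forall D in L, ~~ ((C \proper D) && (D \proper A))]].
Definition crep (L : {set {set V}}) (A : {set V}) (v : V) : {set V} :=
  odflt [set v] [pick C | maxchild L A C && (v \in C)].
Definition contracted_vertices (L : {set {set V}}) (A : {set V}) : {set {set V}} :=
  [set crep L A v | v in A].
Definition contracted_edges (L : {set {set V}}) (A : {set V}) : {set E} :=
  [set e in Eset A | crep L A (src e) != crep L A (tgt e)].
Definition spanning_tree_contracted (L : {set {set V}}) (A : {set V}) (F : {set E}) : Prop :=
  spanning_tree (fun e => crep L A (src e)) (fun e => crep L A (tgt e))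
    (contracted_vertices L A) (contracted_edges L A) F.

Definition rainbow (Ss : seq {set V}) (e f : E) : bool :=
  all (fun S : {set V} => (e \in delta S) ==> (f \in delta S)) Ss
  || all (fun S : {set V} => (f \in delta S) ==> (e \in delta S)) Ss.

Variable R : realFieldType.

Definition xsum (x : E -> R) (F : {set E}) : R := \sum_(e in F) x e.
Definition supp (x : E -> R) : {set E} := [set e | 0 < x e].
Definition cost (c x : E -> R) : R := \sum_(e : E) c e * x e.
Definition cost_set (c : E -> R) (T : {set E}) : R := \sum_(e in T) c e.

Definition fractional_spanning_tree (x : E -> R) : Prop :=
  [/\ (forall e, 0 <= x e),
      xsum x [set: E] = #|V|%:R - 1
    & forall S : {set V}, S != set0 -> S != [set: V] -> xsum x (Eset S) <= #|S|%:R - 1].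

Definition P_feasible (Ss : seq {set V}) (b : {set V} -> int) (lam : R) (x : E -> R) : Prop :=
  fractional_spanning_tree x /\ forall S, S \in Ss -> xsum x (delta S) <= lam * (b S)%:~R.
Definition P_optimal (Ss : seq {set V}) (b : {set V} -> int) (lam : R) (c x : E -> R) : Prop :=
  P_feasible Ss b lam x /\ forall z, P_feasible Ss b lam z -> cost c x <= cost c z.

Definition tight (x : E -> R) (A : {set V}) : Prop := xsum x (Eset A) = #|A|%:R - 1.
Definition tight_laminar (x : E -> R) (L : {set {set V}}) : Prop :=
  laminar L /\ forall A, A \in L -> A != set0 /\ tight x A.
Definition laminar_decomposition (x : E -> R) (L : {set {set V}}) : Prop :=
  tight_laminar x L /\ forall L2, tight_laminar x L2 -> L \subset L2 -> L2 = L.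

Definition rainbow_free (Ss : seq {set V}) (x : E -> R) (L : {set {set V}}) : Prop :=
  laminar_decomposition x L /\
  forall A, A \in L -> forall e f,
    e \in supp x :&: contracted_edges L A -> f \in supp x :&: contracted_edges L A ->
    e != f -> ~~ rainbow Ss e f.

End Defs.

(* Main.v *)
Require Import Defs.
From HB Require Import structures.
From mathcomp Require Import all_boot all_order all_algebra.
From mathcomp Require Import zify.
From mathcomp Require Import ring lra.
Set Implicit Arguments. Unset Strict Implicit. Unset Printing Implicit Defensive.
Import Order.TTheory GRing.Theory Num.Theory.

Lemma connect_transfer (T : finType) (r r' : rel T) (C : pred T) x y :
  (forall a b, C a -> r a b -> C b /\ r' a b) -> C x -> connect r x y ->
  C y /\ connect r' x y.
Proof.
move=> H Cx /connectP [p pth ->] {y}.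
elim: p x Cx pth => [|z p IH] x Cx /=; first by split => //; exact: connect0.
case/andP=> rxz pth; have [Cz r'xz] := H _ _ Cx rxz.
have [Cl Hc] := IH z Cz pth; split => //.
exact: connect_trans (connect1 r'xz) Hc.
Qed.

Lemma connect_closed (T : finType) (r : rel T) (C : pred T) x y :
  (forall a b, C a -> r a b -> C b) -> C x -> connect r x y -> C y.
Proof.
move=> H Cx cxy; have [] := @connect_transfer T r r C x y => //.
by move=> a b Ca rab; split; [exact: H Ca rab | exact: rab].
Qed.

Section Graph.
Variables (V E : finType) (src tgt : E -> V).
Local Notation adjF := (adj src tgt).

Lemma adj_sym (F : {set E}) : symmetric (adjF F).
Proof.
move=> u v; rewrite /adj; apply/existsP/existsP => [] [e He]; exists e;
  by rewrite orbC.
Qed.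

Lemma adj_edge (F : {set E}) f : f \in F -> adjF F (src f) (tgt f).
Proof. by move=> Hf; apply/existsP; exists f; rewrite Hf !eqxx. Qed.

Lemma adjP (F : {set E}) u v : adjF F u v ->
  exists2 f, f \in F & ((src f == u) && (tgt f == v)) || ((src f == v) && (tgt f == u)).
Proof. by case/existsP => f /andP[Hf H]; exists f. Qed.

Lemma adj_mono (F1 F2 : {set E}) : F1 \subset F2 -> subrel (adjF F1) (adjF F2).
Proof.
move=> sF u v /adjP [f Hf H]; apply/existsP; exists f.
by rewrite (subsetP sF _ Hf) H.
Qed.

Lemma connect_mono (F1 F2 : {set E}) u v : F1 \subset F2 -> connect (adjF F1) u v ->
  connect (adjF F2) u v.
Proof.
move=> sF; apply: connect_sub => a b Hab; apply: connect1; exact: adj_mono Hab.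
Qed.

Lemma connect_symF (F : {set E}) u v : connect (adjF F) u v = connect (adjF F) v u.
Proof. by apply: sym_connect_sym; exact: adj_sym. Qed.

Lemma restrict_connect (F : {set E}) (C : {set V}) a b :
  (forall f, f \in F -> (src f \in C) = (tgt f \in C)) -> a \in C ->
  connect (adjF F) a b -> connect (adjF (F :&: [set f | src f \in C])) a b.
Proof.
move=> HC aC cab.
have [] := @connect_transfer V (adjF F) (adjF (F :&: [set f | src f \in C]))
  (mem C) a b => //.
move=> u v uC /adjP [f Hf H].
have Hs : src f \in C.
  by case/orP: H => /andP[/eqP e1 /eqP e2]; [rewrite e1 | rewrite HC // e2].
have Ht : tgt f \in C by rewrite -HC.
split.
  by case/orP: H => /andP[/eqP e1 /eqP e2]; [rewrite -e2 | rewrite -e1].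
apply/existsP; exists f; rewrite inE Hf inE Hs /=; exact: H.
Qed.

Definition forest (F : {set E}) :=
  forall e, e \in F -> ~~ connect (adjF (F :\ e)) (src e) (tgt e).

Lemma forest_sub (F1 F2 : {set E}) : F1 \subset F2 -> forest F2 -> forest F1.
Proof.
move=> sF H e He; apply: contra (H e (subsetP sF _ He)).
apply: connect_mono; exact: setSD.
Qed.


Lemma in_Eset (X : {set V}) f : (f \in Eset src tgt X) = (src f \in X) && (tgt f \in X).
Proof. by rewrite inE. Qed.

Lemma forest_card n (F : {set E}) (X : {set V}) :
  #|F| <= n -> forest F -> F \subset Eset src tgt X -> X != set0 -> #|F| < #|X|.
Proof.
elim: n F X => [|n IH] F X.
  rewrite leqn0 cards_eq0 => /eqP -> _ _ /set0Pn [x Hx].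
  by rewrite cards0 card_gt0; apply/set0Pn; exists x.
move=> Hn Hf sF HX.
have [F0|[e He]] := set_0Vmem F.
  by move: HX; rewrite F0 cards0 card_gt0.
set F' := F :\ e.
set Y := [set w | connect (adjF F') (src e) w].
have cl : forall f, f \in F' -> (src f \in Y) = (tgt f \in Y).
  move=> f Hf'; rewrite !inE; apply/idP/idP => H.
    by apply: connect_trans H (connect1 (adj_edge Hf')).
  apply: connect_trans H _; rewrite connect_symF; exact: connect1 (adj_edge Hf').
set F1 := F' :&: [set f | src f \in Y].
set F2 := F' :\: [set f | src f \in Y].
have cF' : #|F| = #|F'|.+1 by rewrite (cardsD1 e F) He.
have cF12 : #|F1| + #|F2| = #|F'| by rewrite cardsID.
have eX : src e \in X /\ tgt e \in X by move: (subsetP sF _ He); rewrite in_Eset => /andP.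
have sY : src e \in Y by rewrite inE connect0.
have nY : tgt e \notin Y by rewrite inE; exact: Hf.
have sF' : F' \subset F by exact: subD1set.
have inF1 : forall f, f \in F1 -> [/\ f \in F', src f \in Y & tgt f \in Y].
  move=> f; rewrite inE => /andP [Hf' Hs]; rewrite inE in Hs.
  by split => //; rewrite -cl.
have inF2 : forall f, f \in F2 -> [/\ f \in F', src f \notin Y & tgt f \notin Y].
  move=> f; rewrite inE => /andP [Hs Hf']; rewrite inE in Hs.
  by split => //; rewrite -cl.
have sF1 : F1 \subset Eset src tgt (X :&: Y).
  apply/subsetP => f /inF1 [Hf' Hs Ht].
  move: (subsetP sF _ (subsetP sF' _ Hf')); rewrite !in_Eset => /andP [H1 H2].
  by rewrite !in_setI H1 H2 Hs Ht.
have sF2 : F2 \subset Eset src tgt (X :\: Y).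
  apply/subsetP => f /inF2 [Hf' Hs Ht].
  move: (subsetP sF _ (subsetP sF' _ Hf')); rewrite !in_Eset => /andP [H1 H2].
  by rewrite !in_setD H1 H2 Hs Ht.
have cF1 : #|F1| <= #|F'| by rewrite -cF12 leq_addr.
have cF2 : #|F2| <= #|F'| by rewrite -cF12 leq_addl.
have sFF1 : F1 \subset F by apply/subsetP => f /inF1 [H _ _]; exact: subsetP sF' _ H.
have sFF2 : F2 \subset F by apply/subsetP => f /inF2 [H _ _]; exact: subsetP sF' _ H.
have h1 := IH F1 (X :&: Y) ltac:(lia) (forest_sub sFF1 Hf) sF1
  ltac:(by apply/set0Pn; exists (src e); rewrite in_setI sY andbT; case: eX).
have h2 := IH F2 (X :\: Y) ltac:(lia) (forest_sub sFF2 Hf) sF2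
  ltac:(by apply/set0Pn; exists (tgt e); rewrite in_setD nY; case: eX).
have cX : #|X :&: Y| + #|X :\: Y| = #|X| by rewrite cardsID.
lia.
Qed.

Lemma card_le1_connect0 (X : {set V}) :
  (forall u v, u \in X -> v \in X -> connect (adjF set0) u v) -> #|X| <= 1.
Proof.
move=> H; have [->|[x Hx]] := set_0Vmem X; first by rewrite cards0.
have sX : X \subset [set x].
  apply/subsetP => v Hv; have := H x v Hx Hv.
  have step : forall a b, a \in [set x] -> adjF set0 a b -> b \in [set x].
    by move=> a b _ /adjP [f]; rewrite in_set0.
  move=> c; apply: (@connect_closed _ _ (fun a => a \in [set x]) x v step) c; by rewrite inE.
by rewrite -(cards1 x) subset_leq_card.
Qed.

Lemma conn_card n (F : {set E}) (X : {set V}) : #|F| <= n ->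
  (forall u v, u \in X -> v \in X -> connect (adjF F) u v) -> #|X| <= #|F|.+1.
Proof.
elim: n F X => [|n IH] F X.
  rewrite leqn0 cards_eq0 => /eqP -> H; rewrite cards0; exact: card_le1_connect0.
move=> Hn HX.
have [F0|[e He]] := set_0Vmem F.
  by rewrite F0 cards0; apply: card_le1_connect0; rewrite -F0.
have [X0|[x0 Hx0]] := set_0Vmem X; first by rewrite X0 cards0.
set F' := F :\ e.
have cF' : #|F| = #|F'|.+1 by rewrite (cardsD1 e F) He.
have hn : #|F'| <= n by rewrite -ltnS -cF'.
have adjF' : forall a b, adjF F a b -> adjF F' a b \/
    ((a == src e) && (b == tgt e)) || ((a == tgt e) && (b == src e)).
  move=> a b /adjP [f Hf Hab]; have [fe|fne] := eqVneq f e.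
    by right; subst f; move: Hab => /orP [] /andP [/eqP <- /eqP <-]; rewrite !eqxx ?orbT.
  by left; apply/existsP; exists f; rewrite !inE fne Hf Hab.
set Y := [set w | connect (adjF F') x0 w].
have clY : forall a b, a \in Y -> adjF F' a b -> b \in Y.
  by move=> a b; rewrite !inE => H1 H2; apply: connect_trans H1 (connect1 H2).
have [eqY|neqY] := boolP ((src e \in Y) == (tgt e \in Y)).
  have sXY : forall w, w \in X -> w \in Y.
    move=> w Hw; apply: (@connect_closed _ _ (fun a => a \in Y)) (HX _ _ Hx0 Hw);
      last by rewrite inE connect0.
    move=> a b Ha /adjF' [|/orP [] /andP [/eqP Ea /eqP Eb]]; first exact: clY.
      by subst a b; rewrite -(eqP eqY).
    by subst a b; rewrite (eqP eqY).
  have H : forall u v, u \in X -> v \in X -> connect (adjF F') u v.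
    move=> u v Hu Hv; have := sXY _ Hu; have := sXY _ Hv; rewrite !inE => H1 H2.
    by apply: connect_trans _ H1; rewrite connect_symF.
  have h := IH F' X hn H; rewrite cF'; apply: leq_trans h _; exact: leqnSn.
have [q [nqY qe]] : exists q, q \notin Y /\ (forall w, (w == src e) || (w == tgt e) ->
    w \in Y \/ w = q).
  have Ht : (tgt e \in Y) = ~~ (src e \in Y).
    by move: neqY; case: (src e \in Y); case: (tgt e \in Y).
  case: (boolP (src e \in Y)) Ht => Hs Ht.
    exists (tgt e); split; first by rewrite Ht.
    by move=> w /orP [] /eqP ->; [left | right].
  exists (src e); split => //.
  by move=> w /orP [] /eqP ->; [right | left; rewrite Ht].
set Z := [set w | connect (adjF F') q w].
have clZ : forall a b, a \in Z -> adjF F' a b -> b \in Z.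
  by move=> a b; rewrite !inE => H1 H2; apply: connect_trans H1 (connect1 H2).
have sXYZ : forall w, w \in X -> (w \in Y) || (w \in Z).
  move=> w Hw; apply: (@connect_closed _ _ (fun w => (w \in Y) || (w \in Z)))
     (HX _ _ Hx0 Hw); last by rewrite /= inE connect0.
  move=> a b /= /orP Ha /adjF' [Hab|Hab].
    by case: Ha => Ha; [rewrite (clY _ _ Ha Hab) | rewrite (clZ _ _ Ha Hab) orbT].
  have : (b == src e) || (b == tgt e) by move: Hab => /orP [] /andP [_ ->]; rewrite ?orbT.
  by case/qe => [->|->] //; rewrite [q \in Z]inE connect0 orbT.
have ZnY : forall w, w \in Z -> w \notin Y.
  move=> w; rewrite !inE => Hq; apply: contra nqY; rewrite inE => Hx.
  by apply: connect_trans Hx _; rewrite connect_symF.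
have clF : forall f, f \in F' -> (src f \in Y) = (tgt f \in Y).
  move=> f Hf'; apply/idP/idP => H; first exact: clY H (adj_edge Hf').
  by apply: clY H _; rewrite adj_sym; exact: adj_edge Hf'.
set F1 := F' :&: [set f | src f \in Y].
set F2 := F' :\: [set f | src f \in Y].
have cF12 : #|F1| + #|F2| = #|F'| by rewrite cardsID.
have eF2 : F2 = F' :&: [set f | src f \in ~: Y].
  by apply/setP => f; rewrite !inE andbC.
have h1 := IH F1 (X :&: Y) (leq_trans (leq_trans (leq_addr _ _) (eq_leq cF12)) hn).
have h2 := IH F2 (X :&: Z) (leq_trans (leq_trans (leq_addl _ _) (eq_leq cF12)) hn).
have c1 : forall u, u \in X :&: Y -> connect (adjF F1) x0 u.
  move=> u; rewrite in_setI => /andP [_ Hu].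
  apply: restrict_connect => //; first by rewrite inE connect0.
  by move: Hu; rewrite inE.
have c2 : forall u, u \in X :&: Z -> connect (adjF F2) q u.
  move=> u; rewrite in_setI => /andP [_ Hu]; rewrite eF2.
  apply: restrict_connect => //.
  - by move=> f Hf; rewrite !in_setC clF.
  - by rewrite in_setC.
  - by move: Hu; rewrite inE.
have := h1 ltac:(by move=> u v Hu Hv; apply: connect_trans (c1 v Hv);
   rewrite connect_symF; exact: c1).
have := h2 ltac:(by move=> u v Hu Hv; apply: connect_trans (c2 v Hv);
   rewrite connect_symF; exact: c2).
have sU : X \subset (X :&: Y) :|: (X :&: Z).
  by apply/subsetP => w Hw; rewrite in_setU !in_setI Hw /=; exact: sXYZ.
move=> hB hA; apply: leq_trans (subset_leq_card sU) _.
apply: leq_trans (leq_card_setU _ _) _.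
rewrite cF' -cF12; apply: leq_trans (leq_add hA hB) _.
by rewrite addSn addnS.
Qed.


Lemma crep_spec (L : {set {set V}}) A v : v \in crep L A v /\
  ((crep L A v \in L /\ crep L A v \proper A) \/ crep L A v = [set v]).
Proof.
rewrite /crep; case: pickP => [C /andP [/and3P [HC Hp _] Hv]|_] /=.
  by split => //; left.
by rewrite inE; split => //; right.
Qed.

Lemma tree_connect (Lp : {set {set V}}) (TL : {set V} -> {set E}) :
  (forall A, A \in Lp -> spanning_tree_contracted src tgt Lp A (TL A)) ->
  forall n (A : {set V}), #|A| <= n -> A \in Lp -> forall u v, u \in A -> v \in A ->
  connect (adjF (\bigcup_(B in Lp | B \subset A) TL B)) u v.
Proof.
move=> HT; elim=> [|n IH] A.
  by rewrite leqn0 cards_eq0 => /eqP -> _ u v; rewrite in_set0.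
move=> Hn HA u v Hu Hv.
set U := \bigcup_(B in Lp | B \subset A) TL B.
have [sT conn _] := HT A HA.
have cls : forall w w', w \in A -> w' \in A -> crep Lp A w = crep Lp A w' ->
    connect (adjF U) w w'.
  move=> w w' Hw Hw' Ec.
  have [Hw'c _] := crep_spec Lp A w'.
  have [Hwc [[HC Hp]|E1]] := crep_spec Lp A w.
    set C := crep Lp A w in HC Hp Hwc Ec.
    have hC : #|C| <= n by rewrite -ltnS; apply: leq_trans (proper_card Hp) Hn.
    have Hw'C : w' \in C by rewrite Ec.
    have := IH C hC HC w w' Hwc Hw'C.
    apply: connect_mono; apply/bigcupsP => B /andP [HB sB].
    by apply: (bigcup_sup B); rewrite HB (subset_trans sB (proper_sub Hp)).
  move: Hw'c; rewrite -Ec E1 inE => /eqP ->; exact: connect0.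
have edg : forall f, f \in TL A -> [/\ src f \in A, tgt f \in A & f \in U].
  move=> f Hf; have := subsetP sT _ Hf; rewrite inE => /andP [+ _].
  rewrite in_Eset => /andP [H1 H2]; split => //.
  by apply: (subsetP (bigcup_sup A _)) Hf; rewrite HA subxx.
have Hcu : crep Lp A u \in contracted_vertices Lp A by apply: imset_f.
have Hcv : crep Lp A v \in contracted_vertices Lp A by apply: imset_f.
have := conn _ _ Hcu Hcv.
pose P := fun K : {set V} => [forall z, ((z \in A) && (crep Lp A z == K)) ==> connect (adjF U) u z].
move=> c; have : P (crep Lp A v).
  apply: (@connect_closed _ _ P _ _ _ _ c).
    move=> a b Pa /existsP [f /andP [Hf H]].
    have [Hs Ht HfU] := edg f Hf.
    apply/forallP => z; apply/implyP => /andP [Hz /eqP Ez].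
    case/orP: H => /andP [/eqP Ea /eqP Eb].
      have c1 : connect (adjF U) u (src f) by move/forallP: Pa => /(_ (src f)); rewrite Hs Ea eqxx.
      apply: connect_trans (connect_trans c1 (connect1 (adj_edge HfU))) _.
      by apply: cls => //; rewrite Ez -Eb.
    have c1 : connect (adjF U) u (tgt f) by move/forallP: Pa => /(_ (tgt f)); rewrite Ht Eb eqxx.
    apply: connect_trans (connect_trans c1 (connect1 _)) _; first by rewrite adj_sym; exact: adj_edge HfU.
    by apply: cls => //; rewrite Ez -Ea.
  apply/forallP => z; apply/implyP => /andP [Hz /eqP Ez]; apply: cls => //; by rewrite Ez.
by move/forallP => /(_ v); rewrite Hv eqxx.
Qed.

End Graph.

Section Cross.
Variable V : finType.
Implicit Types X Y S A B : {set V}.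

Definition crosses X Y :=
  [exists z, (z \in X) && (z \in Y)] && [exists z, (z \in X) && (z \notin Y)] &&
  [exists z, (z \in Y) && (z \notin X)].

Lemma not_crosses X Y : ~~ crosses X Y -> [|| X \subset Y, Y \subset X | [disjoint X & Y]].
Proof.
rewrite /crosses !negb_and !negb_exists => /orP [/orP [] | ] /forallP H.
- apply/orP; right; apply/orP; right; rewrite disjoints_subset.
  by apply/subsetP => z Hz; rewrite inE; move: (H z); rewrite Hz.
- by apply/orP; left; apply/subsetP => z Hz; move: (H z); rewrite Hz /= negbK.
- by apply/orP; right; apply/orP; left; apply/subsetP => z Hz; move: (H z); rewrite Hz /= negbK.
Qed.

Lemma lam_cases B A : [|| B \subset A, A \subset B | [disjoint B & A]] ->
  [\/ forall z, z \in B -> z \in A, forall z, z \in A -> z \in B |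
      forall z, z \in B -> z \in A -> False].
Proof.
case/or3P => H; [apply: Or31 | apply: Or32 | apply: Or33]; try exact: subsetP H.
by move=> z Hz; rewrite (disjointFr H Hz).
Qed.

Lemma crossesP X Y : reflect
  [/\ exists z, (z \in X) && (z \in Y), exists z, (z \in X) && (z \notin Y) &
      exists z, (z \in Y) && (z \notin X)] (crosses X Y).
Proof.
apply: (iffP idP).
  by case/andP => /andP [/existsP H1 /existsP H2] /existsP H3.
by case=> [[a Ha] [b Hb] [c Hc]]; rewrite /crosses; apply/andP; split;
  [apply/andP; split|]; apply/existsP; eexists; eassumption.
Qed.

Ltac bb z S A B := case: (z \in S); case: (z \in A); case: (z \in B).

Lemma cross_dec_I S A B : [|| B \subset A, A \subset B | [disjoint B & A]] ->
  crosses (S :&: A) B -> crosses S B.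
Proof.
move/lam_cases => Hl /crossesP [[z1 H1] [z2 H2] [z3 H3]].
move: H1 H2 H3; rewrite !inE => H1 H2 H3.
case: Hl => h.
- apply/crossesP; split; [exists z1 | exists z2 | exists z3].
  + by move: H1; bb z1 S A B.
  + by move: H2; bb z2 S A B.
  + by move: H3 (h z3); bb z3 S A B => // _ /(_ isT).
- by exfalso; move: H2 (h z2); bb z2 S A B => // _ /(_ isT).
- by exfalso; move: H1 (h z1); bb z1 S A B => // _ /(_ isT isT).
Qed.

Lemma cross_dec_U S A B : crosses S A -> [|| B \subset A, A \subset B | [disjoint B & A]] ->
  crosses (S :|: A) B -> crosses S B.
Proof.
move=> /crossesP [[w Hw] _ _] /lam_cases Hl /crossesP [[z1 H1] [z2 H2] [z3 H3]].
move: H1 H2 H3; rewrite !inE => H1 H2 H3.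
case: Hl => h.
- by exfalso; move: H3 (h z3); bb z3 S A B => // _ /(_ isT).
- apply/crossesP; split; [exists w | exists z2 | exists z3].
  + by move: Hw (h w); bb w S A B => // _ /(_ isT).
  + by move: H2 (h z2); bb z2 S A B => // _ /(_ isT).
  + by move: H3; bb z3 S A B.
- apply/crossesP; split; [exists z1 | exists w | exists z3].
  + by move: H1 (h z1); bb z1 S A B => // _ /(_ isT isT).
  + by move: Hw (h w); bb w S A B => // _ /(_ isT isT).
  + by move: H3; bb z3 S A B.
Qed.

Lemma not_crosses_IA S A : ~~ crosses (S :&: A) A.
Proof.
apply/negP => /crossesP [_ [z H] _]; move: H; rewrite !inE; by bb z S A A.
Qed.

Lemma not_crosses_UA S A : ~~ crosses (S :|: A) A.
Proof.
apply/negP => /crossesP [_ _ [z H]]; move: H; rewrite !inE; by bb z S A A.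
Qed.

End Cross.

Local Open Scope ring_scope.

Lemma common_eps (R : realFieldType) (I : finType) (P : I -> R -> Prop) :
  (forall i, exists2 e, 0 < e & forall e', 0 < e' -> e' <= e -> P i e') ->
  exists2 e, 0 < e & forall i, P i e.
Proof.
move=> H.
suff [e He Hs] : exists2 e, 0 < e & forall i, i \in enum I -> forall e', 0 < e' -> e' <= e -> P i e'.
  by exists e => // i; apply: Hs => //; rewrite mem_enum.
elim: (enum I) => [|i s [e2 He2 Hs]]; first by exists 1.
have [e1 He1 H1] := H i.
exists (Num.min e1 e2); first by rewrite lt_min He1 He2.
move=> j; rewrite inE => /orP [/eqP ->|Hj] e' He'; rewrite le_min => /andP [Ha Hb].
  exact: H1.
exact: Hs.
Qed.

Section RSec.
Variables (R : realFieldType) (V E : finType) (src tgt : E -> V).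
Local Notation adjF := (adj src tgt).
Local Notation Es := (Eset src tgt).

Definition gT (T : {set E}) : E -> R := fun e => (e \in T)%:R.

Lemma xsum_lin (a b : R) (f g : E -> R) F :
  xsum (fun e => a * f e + b * g e) F = a * xsum f F + b * xsum g F.
Proof. by rewrite /xsum big_split /= !mulr_sumr. Qed.

Lemma cost_lin (c : E -> R) (a b : R) (f g : E -> R) :
  cost c (fun e => a * f e + b * g e) = a * cost c f + b * cost c g.
Proof.
rewrite /cost !mulr_sumr -big_split /=; apply: eq_bigr => e _; ring.
Qed.

Lemma xsum_gT T F : xsum (gT T) F = #|T :&: F|%:R.
Proof.
rewrite /xsum /gT (big_setID T) /=.
rewrite [X in X + _](eq_bigr (fun _ => 1)); last by move=> e; rewrite inE => /andP [_ ->].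
rewrite [X in _ + X]big1 ?addr0; last by move=> e; rewrite !inE => /andP [H _]; rewrite (negbTE H).
by rewrite sumr_const setIC.
Qed.

Lemma cost_set_gT (c : E -> R) T : cost_set c T = cost c (gT T).
Proof.
rewrite /cost_set /cost big_mkcond /=; apply: eq_bigr => e _.
by rewrite /gT; case: (e \in T); rewrite ?mulr1 ?mulr0.
Qed.

Lemma xsum_ge0 (f : E -> R) F : (forall e, 0 <= f e) -> 0 <= xsum f F.
Proof. by move=> H; rewrite /xsum sumr_ge0. Qed.

Definition cross (S A : {set V}) : {set E} :=
  [set e | ((src e \in S :\: A) && (tgt e \in A :\: S)) ||
           ((src e \in A :\: S) && (tgt e \in S :\: A))].

Lemma uncross_id (g : E -> R) (S A : {set V}) :
  xsum g (Es (S :|: A)) + xsum g (Es (S :&: A)) =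
  xsum g (Es S) + xsum g (Es A) + xsum g (cross S A).
Proof.
rewrite /xsum !(big_mkcond (fun e => e \in _)) -!big_split /=.
apply: eq_bigr => e _; rewrite !inE.
case: (src e \in S); case: (src e \in A); case: (tgt e \in S); case: (tgt e \in A);
  rewrite /= ?addr0 ?add0r //.
Qed.

End RSec.

Section Tight.
Variables (R : realFieldType) (V E : finType) (src tgt : E -> V).
Local Notation Es := (Eset src tgt).
Variables (x : E -> R) (L : {set {set V}}) (T : {set E}).
Hypothesis Hfst : fractional_spanning_tree src tgt x.
Hypothesis HL : laminar_decomposition src tgt x L.
Hypothesis HT : T \subset supp x.
Hypothesis Hr : forall A, A \in L -> xsum (gT R T) (Es A) = #|A|%:R - 1.

Lemma EsT : Es [set: V] = [set: E].
Proof. by apply/setP => e; rewrite !inE. Qed.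

Lemma fst_le X : X != set0 -> xsum x (Es X) <= #|X|%:R - 1.
Proof.
case: Hfst => nn sumE cons HX.
have [->|HXT] := eqVneq X [set: V]; last exact: cons.
by rewrite EsT sumE cardsT.
Qed.

Lemma no_cross_rank S : S != set0 -> tight src tgt x S ->
  ~~ [exists B in L, crosses S B] -> #|S|%:R - 1 <= xsum (gT R T) (Es S).
Proof.
move=> HS Ht Hnc.
have [[Hlam Hmem] Hmax] := HL.
have ncr : forall B, B \in L -> [|| S \subset B, B \subset S | [disjoint S & B]].
  move=> B HB; apply: not_crosses; apply: contra Hnc => H.
  by apply/existsP; exists B; rewrite HB.
have tl : tight_laminar src tgt x (S |: L).
  split.
    move=> A' B' /setU1P [->|HA'] /setU1P [->|HB'].
    - by rewrite subxx.
    - exact: ncr.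
    - by have := ncr A' HA'; rewrite disjoint_sym => /or3P [] ->; rewrite ?orbT.
    - exact: Hlam.
  by move=> A' /setU1P [->|HA']; [split | exact: Hmem].
have := Hmax _ tl (subsetUr _ _) => eqL.
have SL : S \in L by rewrite -eqL setU11.
by rewrite Hr.
Qed.

Lemma tight_rank n S : (#|[set B in L | crosses S B]| <= n)%N -> S != set0 ->
  tight src tgt x S -> #|S|%:R - 1 <= xsum (gT R T) (Es S).
Proof.
elim: n S => [|n IH] S Hn HS Ht.
  apply: no_cross_rank => //; apply/existsP => [[B /andP [HB HcB]]].
  move: Hn; rewrite leqn0 cards_eq0 => /eqP /setP /(_ B); by rewrite !inE HB HcB.
have [/existsP [A /andP [HA HcA]]|Hnc] := boolP [exists B in L, crosses S B];
  last exact: no_cross_rank.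
have [[Hlam Hmem] Hmax] := HL.
have [HA0 HAt] := Hmem A HA.
case: Hfst => nn sumE cons.
have [[w Hw] [z2 Hz2] [z3 Hz3]] := (crossesP _ _ HcA).
have HI0 : S :&: A != set0 by apply/set0Pn; exists w; rewrite inE.
have HU0 : S :|: A != set0 by apply/set0Pn; exists w; rewrite inE; case/andP: Hw => ->.
have hU := fst_le HU0.
have hI := fst_le HI0.
have idx := uncross_id src tgt x S A.
have idg := uncross_id src tgt (gT R T) S A.
have hC := xsum_ge0 (cross src tgt S A) nn.
have cUI : #|S :|: A|%:R + #|S :&: A|%:R = #|S|%:R + #|A|%:R :> R.
  by rewrite -!natrD cardsUI.
move: Ht HAt; rewrite /tight => Ht HAt.
have xC0 : xsum x (cross src tgt S A) = 0 by lra.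
have tU : tight src tgt x (S :|: A) by rewrite /tight; lra.
have tI : tight src tgt x (S :&: A) by rewrite /tight; lra.
have gC0 : xsum (gT R T) (cross src tgt S A) = 0.
  rewrite /xsum big1 // => e He.
  have := psumr_eq0P (fun i _ => nn i) xC0 He => xe0.
  rewrite /gT; case: (boolP (e \in T)) => // HeT.
  by move: (subsetP HT _ HeT); rewrite inE xe0 ltxx.
have cardlt : forall Y, (forall B, B \in L -> crosses Y B -> crosses S B) -> ~~ crosses Y A ->
    (#|[set B in L | crosses Y B]| <= n)%N.
  move=> Y HY HYA; rewrite -ltnS; apply: leq_trans Hn; apply: proper_card.
  apply/properP; split.
    by apply/subsetP => B; rewrite !inE => /andP [HB HcB]; rewrite HB (HY B HB HcB).
  by exists A; rewrite !inE ?HA ?HcA //= (negbTE HYA).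
have rU := IH (S :|: A) (cardlt _ (fun B HB => cross_dec_U HcA (Hlam B A HB HA)) (not_crosses_UA S A)) HU0 tU.
have rI := IH (S :&: A) (cardlt _ (fun B HB => cross_dec_I (Hlam B A HB HA)) (not_crosses_IA S A)) HI0 tI.
have rA := Hr HA.
lra.
Qed.

End Tight.

Theorem theorem3 (R : realFieldType) (V E : finType) (src tgt : E -> V)
  (c : E -> R) (Ss : seq {set V}) (b : {set V} -> int) (lam : R) :
  (forall u v, connect (adj src tgt [set: E]) u v) ->
  (forall e, 0 <= c e) ->
  is_chain Ss ->
  (exists y : E -> R, P_feasible src tgt Ss b 1 y) ->
  1 < lam ->
  (* step (1) *)
  forall (xs : E -> R) (L : {set {set V}}),
  P_optimal src tgt Ss b lam c xs ->
  laminar_decomposition src tgt xs L ->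
  (* step (2) *)
  forall (xp : E -> R) (Lp : {set {set V}}),
  fractional_spanning_tree src tgt xp ->
  rainbow_free src tgt Ss xp Lp ->
  supp xp \subset supp xs ->
  L \subset Lp ->
  (forall S, S \in Ss -> xsum xp (delta src tgt S) <= xsum xs (delta src tgt S)) ->
  (* step (3): output of the Olver--Zenklusen rounding *)
  forall TL : {set V} -> {set E},
  (forall A, A \in Lp ->
     TL A \subset supp xp /\ spanning_tree_contracted src tgt Lp A (TL A)) ->
  spanning_tree_G src tgt (\bigcup_(A in Lp) TL A) ->
  (forall S, S \in Ss ->
     #|delta src tgt S :&: \bigcup_(A in Lp) TL A|%:R <= 9 * xsum xp (delta src tgt S)) ->
  (* conclusion: cost bound w.r.t. OPT = OPT(1), and degree bounds *)
  (forall y : E -> R, P_feasible src tgt Ss b 1 y ->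
     cost_set c (\bigcup_(A in Lp) TL A) <= lam / (lam - 1) * cost c y) /\
  (forall S, S \in Ss ->
     #|delta src tgt S :&: \bigcup_(A in Lp) TL A|%:R <= 9 * lam * (b S)%:~R).
Proof.
move=> Hconn Hc Hchain _ Hlam xs L [[Hfs Hdeg] Hopt] HL xp Lp Hfxp [HLp Hrb]
  Hsupp HLsub Hdegp TL HTL Hsp Hdeg9.
set T := \bigcup_(A in Lp) TL A.
split; last first.
  move=> S HS; apply: le_trans (Hdeg9 S HS) _; rewrite -mulrA ler_wpM2l //.
  exact: le_trans (Hdegp S HS) (Hdeg S HS).
move=> y [Hfy Hdegy].
have HTsupp : T \subset supp xs.
  by apply/bigcupsP => A HA; apply: subset_trans (proj1 (HTL A HA)) Hsupp.
have [_ HTconn HTfor] := Hsp.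
have HTsp : forall A, A \in Lp -> spanning_tree_contracted src tgt Lp A (TL A).
  by move=> A HA; case: (HTL A HA).
have EsS : forall A B : {set V}, B \subset A -> Eset src tgt B \subset Eset src tgt A.
  move=> A B sBA; apply/subsetP => e; rewrite !inE => /andP [h1 h2].
  by rewrite (subsetP sBA _ h1) (subsetP sBA _ h2).
have rk : forall A, A \in L -> xsum (gT R T) (Eset src tgt A) = #|A|%:R - 1.
  move=> A HA; have HAp := subsetP HLsub _ HA.
  have [[_ Hmem] _] := HL; have [HA0 _] := Hmem A HA.
  have c1 := forest_card (leqnn _) (forest_sub (subsetIl T _) HTfor) (subsetIr _ _) HA0.
  have sub : \bigcup_(B in Lp | B \subset A) TL B \subset T :&: Eset src tgt A.
    apply/bigcupsP => B /andP [HB sBA]; rewrite subsetI; apply/andP; split.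
      exact: (bigcup_sup B HB).
    apply: subset_trans (EsS _ _ sBA).
    have [sT _ _] := HTsp B HB; apply: subset_trans sT _.
    by apply/subsetP => e; rewrite inE => /andP [].
  have c2 := conn_card (leqnn _) (fun u v Hu Hv =>
    connect_mono sub (tree_connect HTsp (leqnn _) HAp Hu Hv)).
  have eA : #|A| = #|T :&: Eset src tgt A|.+1 by apply/eqP; rewrite eqn_leq c2 c1.
  by rewrite xsum_gT eA -addn1 natrD addrK.
case: Hfs => nn sumE cons.
have V0 : [set: V] != set0.
  have := xsum_ge0 [set: E] nn; rewrite sumE => h.
  rewrite -card_gt0 cardsT -(ltr_nat R); lra.
have rV : xsum (gT R T) [set: E] = #|V|%:R - 1.
  have c1 := forest_card (X := [set: V]) (leqnn _) HTfor ltac:(by rewrite EsT subsetT) V0.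
  have c2 := conn_card (X := [set: V]) (leqnn #|T|) (fun u v _ _ => HTconn u v (in_setT u) (in_setT v)).
  have eA : #|[set: V]| = #|T|.+1 by apply/eqP; rewrite eqn_leq c2 c1.
  by rewrite xsum_gT setIT -cardsT eA -addn1 natrD addrK.
have Htr : forall S, S != set0 -> tight src tgt xs S ->
    #|S|%:R - 1 <= xsum (gT R T) (Eset src tgt S).
  move=> S HS Ht; apply: (tight_rank (And3 nn sumE cons) HL HTsupp rk (leqnn _) HS Ht).
pose g := gT R T.
pose P := fun (i : ({set V} + E)%type) (eps : R) => match i with
  | inl X => X != set0 -> X != [set: V] ->
      (1 + eps) * xsum xs (Eset src tgt X) + (- eps) * xsum g (Eset src tgt X) <= #|X|%:R - 1
  | inr e => 0 <= (1 + eps) * xs e + (- eps) * g e end.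
have [eps Heps HP] : exists2 eps, 0 < eps & forall i, P i eps.
  apply: common_eps => [[S|e]] /=.

  - have [S0|HS] := eqVneq S set0; first by exists 1 => // *; rewrite S0 eqxx in H.
    have [ST|HST] := eqVneq S [set: V]; first by exists 1 => // *; rewrite ST eqxx in H0.
    have hc := cons S HS HST.
    have hg := xsum_ge0 (Eset src tgt S) (fun e => ler0n R (e \in T)).
    have [Ht|Hnt] := eqVneq (xsum xs (Eset src tgt S)) (#|S|%:R - 1).
      have := Htr S HS Ht => hr.
      by exists 1 => // e' He' _ _ _; rewrite /g; nra.
    have hlt : xsum xs (Eset src tgt S) < #|S|%:R - 1 by rewrite lt_neqAle Hnt hc.
    set a := xsum xs (Eset src tgt S) in hc hlt *.
    set r := xsum g (Eset src tgt S) in hg *.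
    have [hd|hd] := lerP (a - r) 0.
      by exists 1 => // e' He' _ _ _; nra.
    exists ((#|S|%:R - 1 - a) / (a - r)); first by apply: divr_gt0; lra.
    move=> e' He' Hle _ _.
    have : e' * (a - r) <= (#|S|%:R - 1 - a) by rewrite -ler_pdivlMr.
    nra.
  - have hx := nn e.
    case: (boolP (e \in T)) => HeT.
      have xpos : 0 < xs e by have := subsetP HTsupp _ HeT; rewrite inE.
      exists (xs e) => // e' He' Hle; rewrite /g /gT HeT /= mulr1.
      have := mulr_ge0 (ltW He') hx; nra.
    by exists 1 => // e' He' _; rewrite /g /gT (negbTE HeT) /= mulr0 addr0; apply: mulr_ge0 => //; lra.
pose w := fun e => (1 + eps) * xs e + (- eps) * g e.
have wnn : forall e, 0 <= w e by move=> e; exact: (HP (inr e)).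
pose D := (1 + eps) * lam - 1.
have hD : 0 < D by rewrite /D; nra.
have hD0 : D != 0 by rewrite gt_eqF.
pose al := (lam - 1) / D.
pose be := eps * lam / D.
have hal : 0 <= al by apply: divr_ge0; lra.
have hbe : 0 <= be by apply: divr_ge0; nra.
have hab : al + be = 1 by rewrite /al /be -mulrDl -[X in X / _ = _](_ : D = _) ?divff // /D; ring.
have haD : al * D = lam - 1 by rewrite /al divfK.
have hbD : be * D = eps * lam by rewrite /be divfK.
have hdl : al * (1 + eps) * lam + be = lam.
  apply: (mulIf hD0); transitivity ((1 + eps) * lam * (al * D) + be * D); first ring.
  by rewrite haD hbD /D; ring.
pose p := fun e => al * w e + be * y e.
case: Hfy => ynn ysum ycons.
have Hp : P_feasible src tgt Ss b lam p.
  split.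
    split.
    - by move=> e; rewrite /p; apply: addr_ge0; apply: mulr_ge0.
    - rewrite /p xsum_lin /w xsum_lin sumE rV ysum.
      transitivity ((al + be) * (#|V|%:R - 1)); first ring.
      by rewrite hab mul1r.
    - move=> S HS HST; rewrite /p xsum_lin.
      have h1 : xsum w (Eset src tgt S) <= #|S|%:R - 1 by rewrite /w xsum_lin; exact: (HP (inl S)).
      have h2 := ycons S HS HST.
      apply: le_trans (lerD (ler_wpM2l hal h1) (ler_wpM2l hbe h2)) _.
      by rewrite -mulrDl hab mul1r.
  move=> S HS; rewrite /p xsum_lin.
  have h1 : xsum w (delta src tgt S) <= (1 + eps) * (lam * (b S)%:~R).
    rewrite /w xsum_lin.
    have := xsum_ge0 (delta src tgt S) (fun e => ler0n R (e \in T)).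
    have h1e : 0 <= 1 + eps by lra.
    have := ler_wpM2l h1e (Hdeg S HS) => h h'.
    rewrite -/g in h'; nra.
  have h2 := Hdegy S HS; rewrite mul1r in h2.
  apply: le_trans (lerD (ler_wpM2l hal h1) (ler_wpM2l hbe h2)) _.
  rewrite (_ : al * ((1 + eps) * (lam * (b S)%:~R)) + be * (b S)%:~R =
     (al * (1 + eps) * lam + be) * (b S)%:~R); first by rewrite hdl.
  ring.
have ho := Hopt p Hp.
rewrite /p cost_lin /w cost_lin in ho.
have C0 : 0 <= cost c xs by rewrite /cost sumr_ge0 // => e _; apply: mulr_ge0.
rewrite cost_set_gT -/g.
set C := cost c xs in ho C0 *; set CT := cost c g in ho *; set Cy := cost c y in ho *.
have e1 : (al * ((1 + eps) * C + (- eps) * CT) + be * Cy) * D =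
    (lam - 1) * ((1 + eps) * C - eps * CT) + eps * lam * Cy.
  transitivity ((al * D) * ((1 + eps) * C + (- eps) * CT) + (be * D) * Cy); first ring.
  by rewrite haD hbD; ring.
have h := ler_wpM2r (ltW hD) ho; rewrite e1 /D in h.
have h2 : (lam - 1) * CT <= lam * Cy by nra.
rewrite mulrAC ler_pdivlMr; last lra.
by rewrite mulrC.
Qed.
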